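(* Let $\bar O=O_1,\dots,O_k$ be fresh propositional constants. If $\Gamma\vdash_{\bar O}t:A;\Delta$ and $t\triangleright^*t'$, then $\Gamma\vdash_{\bar O}t':A;\Delta$.
   Context: $\lambda\mu$-terms: $t::= x\mid \lambda x.t\mid (t\;t)\mid \mu a.t\mid (a\;t)$ over disjoint infinite sets of $\lambda$-variables and $\mu$-variables. Reduction $(\lambda x.u\;v)\triangleright u[x:=v]$, $(\mu a.u\;v)\triangleright\mu a.u[a:=^*v]$ ($u[a:=^*v]$ replaces each subterm $(a\;w)$ of $u$ by $(a\;(w\;v))$), $\triangleright^*$ reflexive transitive compatible closure. Types are built from propositional variables, the constants $O_1,\dots,O_k$, and $\perp$ with $\to$. An $\bar O$-type is defined by: each $O_i$ is an $\bar O$-type; if $B$ is an $\bar O$-type then $A\to B$ is an $\bar O$-type. The system $\vdash_{\bar O}$: (ax) $\Gamma\vdash_{\bar O}x:A;\Delta$ if $x:A\in\Gamma$, provided $\Delta$ contains no declaration $a:C$ with $C$ an $\bar O$-type; ($\to_i$) from $\Gamma,x:A\vdash_{\bar O}t:B;\Delta$ infer $\Gamma\vdash_{\bar O}\lambda x.t:A\to B;\Delta$; ($\to_e$) from $\Gamma\vdash_{\bar O}u:A\to B;\Delta$ and $\Gamma\vdash_{\bar O}v:A;\Delta$ infer $\Gamma\vdash_{\bar O}(u\;v):B;\Delta$, provided $B$ is not an $\bar O$-type; ($\mu$) from $\Gamma\vdash_{\bar O}t:\perp;\Delta,a:A$ infer $\Gamma\vdash_{\bar O}\mu a.t:A;\Delta$;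 ($\perp$) from $\Gamma\vdash_{\bar O}t:A;\Delta,a:A$ infer $\Gamma\vdash_{\bar O}(a\;t):\perp;\Delta,a:A$. *)

(* Defs.v *)
(* lambda-mu calculus with de Bruijn indices (two separate
   index spaces: lambda-variables and mu-variables). *)
From Stdlib Require Import List Arith Relations Fin.
Import ListNotations.

Inductive ty (k : nat) : Type :=
| TVar : nat -> ty k
| TO   : Fin.t k -> ty k
| TBot : ty k
| TArr : ty k -> ty k -> ty k.
Arguments TVar {k}. Arguments TO {k}. Arguments TBot {k}. Arguments TArr {k}.

Inductive isOtype {k : nat} : ty k -> Prop :=
| isO_const : forall i, isOtype (TO i)
| isO_arr : forall A B, isOtype B -> isOtype (TArr A B).

(* Terms: Var n (lambda-variable), Lam t (binds a lambda-var), App,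
   Mu t (binds a mu-var), Named a t = (a t). *)
Inductive term : Type :=
| Var : nat -> term
| Lam : term -> term
| App : term -> term -> term
| Mu : term -> term
| Named : nat -> term -> term.

Fixpoint lift_l (c : nat) (t : term) : term :=
  match t with
  | Var n => if n <? c then Var n else Var (S n)
  | Lam u => Lam (lift_l (S c) u)
  | App u v => App (lift_l c u) (lift_l c v)
  | Mu u => Mu (lift_l c u)
  | Named a u => Named a (lift_l c u)
  end.

Fixpoint lift_m (c : nat) (t : term) : term :=
  match t with
  | Var n => Var n
  | Lam u => Lam (lift_m c u)
  | App u v => App (lift_m c u) (lift_m c v)
  | Mu u => Mu (lift_m (S c) u)
  | Named a u => Named (if a <? c then a else S a) (lift_m c u)
  end.

Fixpoint subst_l (j : nat) (v : term) (t : term) : term :=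
  match t with
  | Var n => if n =? j then v else if j <? n then Var (pred n) else Var n
  | Lam u => Lam (subst_l (S j) (lift_l 0 v) u)
  | App u w => App (subst_l j v u) (subst_l j v w)
  | Mu u => Mu (subst_l j (lift_m 0 v) u)
  | Named a u => Named a (subst_l j v u)
  end.

(* structural substitution u[j :=* v]: every subterm (j w) becomes (j (w v)) *)
Fixpoint ssubst (j : nat) (v : term) (t : term) : term :=
  match t with
  | Var n => Var n
  | Lam u => Lam (ssubst j (lift_l 0 v) u)
  | App u w => App (ssubst j v u) (ssubst j v w)
  | Mu u => Mu (ssubst (S j) (lift_m 0 v) u)
  | Named a u =>
      if a =? j then Named a (App (ssubst j v u) v)
      else Named a (ssubst j v u)
  end.

Inductive step : term -> term -> Prop :=
| step_beta : forall u v, step (App (Lam u) v) (subst_l 0 v u)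
| step_mu : forall u v, step (App (Mu u) v) (Mu (ssubst 0 (lift_m 0 v) u))
| step_lam : forall t t', step t t' -> step (Lam t) (Lam t')
| step_appl : forall u u' v, step u u' -> step (App u v) (App u' v)
| step_appr : forall u v v', step v v' -> step (App u v) (App u v')
| step_mub : forall t t', step t t' -> step (Mu t) (Mu t')
| step_named : forall a t t', step t t' -> step (Named a t) (Named a t').

Definition red : term -> term -> Prop := clos_refl_trans term step.

(* The system |-_{O-bar}:  typing k Gamma Delta t A  means  Gamma |- t : A ; Delta.
   Gamma (resp. Delta) lists the types of lambda- (resp. mu-) variables 0,1,2,... *)
Inductive typing {k : nat} : list (ty k) -> list (ty k) -> term -> ty k -> Prop :=
| ty_ax : forall G D n A,
    nth_error G n = Some A ->
    Forall (fun C => ~ isOtype C) D ->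
    typing G D (Var n) A
| ty_lam : forall G D t A B,
    typing (A :: G) D t B -> typing G D (Lam t) (TArr A B)
| ty_app : forall G D u v A B,
    typing G D u (TArr A B) -> typing G D v A -> ~ isOtype B ->
    typing G D (App u v) B
| ty_mu : forall G D t A,
    typing G (A :: D) t TBot -> typing G D (Mu t) A
| ty_named : forall G D a t A,
    nth_error D a = Some A -> typing G D t A -> typing G D (Named a t) TBot.

(* Main.v *)
Require Import Defs.
From Stdlib Require Import List Arith Relations.
From Stdlib Require Import Lia.
Import ListNotations.

Section S.
Variable k : nat.

Lemma ty_Dok : forall (G D : list (ty k)) t A, typing G D t A ->
  Forall (fun C => ~ isOtype C) D.
Proof.
  intros G D t A H; induction H; auto.
  inversion IHtyping; auto.
Qed.

Lemma nth_ins_lt : forall (G1 G2 : list (ty k)) C n, n < length G1 ->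
  nth_error (G1 ++ C :: G2) n = nth_error (G1 ++ G2) n.
Proof. intros; rewrite !nth_error_app1; auto. Qed.

Lemma nth_ins_ge : forall (G1 G2 : list (ty k)) C n, length G1 <= n ->
  nth_error (G1 ++ C :: G2) (S n) = nth_error (G1 ++ G2) n.
Proof.
  intros; rewrite !nth_error_app2 by lia.
  replace (S n - length G1) with (S (n - length G1)) by lia. reflexivity.
Qed.

Lemma weak_l : forall (G D : list (ty k)) t A, typing G D t A ->
  forall G1 G2 C, G = G1 ++ G2 -> typing (G1 ++ C :: G2) D (lift_l (length G1) t) A.
Proof.
  intros G D t A H; induction H; intros G1 G2 C0 E; subst; simpl.
  - destruct (Nat.ltb_spec n (length G1)).
    + apply ty_ax; auto. rewrite nth_ins_lt; auto.
    + apply ty_ax; auto. rewrite nth_ins_ge; auto.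
  - apply ty_lam. apply (IHtyping (A :: G1) G2 C0). reflexivity.
  - eapply ty_app; eauto.
  - apply ty_mu; eauto.
  - eapply ty_named; eauto.
Qed.

Lemma weak_m : forall (G D : list (ty k)) t A, typing G D t A ->
  forall D1 D2 C, D = D1 ++ D2 -> ~ isOtype C ->
  typing G (D1 ++ C :: D2) (lift_m (length D1) t) A.
Proof.
  intros G D t A H; induction H; intros D1 D2 C0 E HC; subst; simpl.
  - apply ty_ax; auto. apply Forall_app in H0 as [H1 H2].
    apply Forall_app; split; auto.
  - apply ty_lam; auto.
  - eapply ty_app; eauto.
  - apply ty_mu. apply (IHtyping (A :: D1) D2 C0); auto.
  - destruct (Nat.ltb_spec a (length D1)).
    + eapply ty_named; eauto. rewrite nth_ins_lt; auto.
    + eapply ty_named; eauto. rewrite nth_ins_ge; auto.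
Qed.

Lemma subst_lem : forall (G D : list (ty k)) t B, typing G D t B ->
  forall G1 A G2 w, G = G1 ++ A :: G2 -> typing (G1 ++ G2) D w A ->
  typing (G1 ++ G2) D (subst_l (length G1) w t) B.
Proof.
  intros G D t B H; induction H; intros G1 A0 G2 w E Hv; subst; simpl.
  - destruct (Nat.eqb_spec n (length G1)).
    + subst. rewrite nth_error_app2 in H by lia.
      rewrite Nat.sub_diag in H. simpl in H. inversion H; subst; auto.
    + destruct (Nat.ltb_spec (length G1) n).
      * apply ty_ax; auto. destruct n; [lia|]. simpl.
        rewrite <- nth_ins_ge with (C := A0) by lia. auto.
      * apply ty_ax; auto. rewrite <- nth_ins_lt with (C := A0) by lia. auto.
  - apply ty_lam. apply (IHtyping (A :: G1) A0 G2); auto.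
    apply (weak_l _ _ _ _ Hv [] _ A). reflexivity.
  - eapply ty_app; eauto.
  - apply ty_mu. apply (IHtyping G1 A0 G2); auto.
    apply (weak_m _ _ _ _ Hv [] _ A); auto.
    apply ty_Dok in H. inversion H; auto.
  - eapply ty_named; eauto.
Qed.

Lemma ssubst_lem : forall (G D : list (ty k)) t B, typing G D t B ->
  forall D1 A B' D2 w, D = D1 ++ TArr A B' :: D2 -> ~ isOtype B' ->
  typing G (D1 ++ B' :: D2) w A ->
  typing G (D1 ++ B' :: D2) (ssubst (length D1) w t) B.
Proof.
  intros G D t B H; induction H; intros D1 A0 B' D2 w E HB Hv; subst; simpl.
  - apply ty_ax; auto. apply Forall_app in H0 as [H1 H2].
    inversion H2; subst. apply Forall_app; split; auto.
  - apply ty_lam. apply IHtyping with A0; auto.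
    apply (weak_l _ _ _ _ Hv [] _ A). reflexivity.
  - eapply ty_app; eauto.
  - apply ty_mu. apply (IHtyping (A :: D1) A0 B' D2); auto.
    apply (weak_m _ _ _ _ Hv [] _ A); auto.
    apply ty_Dok in H. inversion H; auto.
  - destruct (Nat.eqb_spec a (length D1)).
    + subst. rewrite nth_error_app2 in H by lia.
      rewrite Nat.sub_diag in H. simpl in H. inversion H; subst.
      eapply ty_named.
      * rewrite nth_error_app2 by lia. rewrite Nat.sub_diag. reflexivity.
      * eapply ty_app; eauto.
    + eapply ty_named; eauto.
      destruct (Nat.ltb_spec a (length D1)).
      * rewrite nth_error_app1 in * by lia. auto.
      * rewrite nth_error_app2 in * by lia.
        destruct (a - length D1) eqn:Ea; [lia|]. auto.
Qed.

Lemma sr_step : forall t t', step t t' ->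
  forall (G D : list (ty k)) A, typing G D t A -> typing G D t' A.
Proof.
  intros t t' Hs; induction Hs; intros G D T Ht.
  - inversion Ht as [| |G0 D0 u0 v0 A0 B0 Hu Hv HB| |]; subst.
    inversion Hu as [|G1 D1 t1 A1 B1 Hb| | |]; subst.
    apply (subst_lem _ _ _ _ Hb [] A0 G); auto.
  - inversion Ht as [| |G0 D0 u0 v0 A0 B0 Hu Hv HB| |]; subst.
    inversion Hu as [| | |G1 D1 t1 A1 Hb|]; subst.
    apply ty_mu. apply (ssubst_lem _ _ _ _ Hb [] A0 T D); auto.
    apply (weak_m _ _ _ _ Hv [] D T); auto.
  - inversion Ht; subst. apply ty_lam; auto.
  - inversion Ht; subst. eapply ty_app; eauto.
  - inversion Ht; subst. eapply ty_app; eauto.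
  - inversion Ht; subst. apply ty_mu; auto.
  - inversion Ht; subst. eapply ty_named; eauto.
Qed.

End S.

Theorem mainTheorem17 (k : nat) (G D : list (ty k)) (t t' : term) (A : ty k) :
  typing G D t A -> red t t' -> typing G D t' A.
Proof.
  intros Ht Hr. revert G D A Ht.
  induction Hr; intros; eauto using sr_step.
Qed.
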